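(* Let $X$ be a real Hilbert space, let $A\colon X\rightrightarrows X$ with $\operatorname{dom}A\ne\varnothing$, let $\rho\in\,]-1,+\infty[$, set $D=\operatorname{ran}(\mathrm{Id}+A)$, $T=J_A$ (i.e., $A=T^{-1}-\mathrm{Id}$), and $\alpha=\tfrac{1}{2(\rho+1)}$. Then: (i) $A$ is $\rho$-comonotone $\iff$ $T$ is $\tfrac{1}{2(\rho+1)}$-conically nonexpansive. (ii) $A$ is maximally $\rho$-comonotone $\iff$ [$T$ is $\alpha$-conically nonexpansive and $D=X$]. (iii) $A$ is $(-\tfrac12)$-comonotone $\iff$ $T$ is nonexpansive. (iv) $A$ is maximally $(-\tfrac12)$-comonotone $\iff$ [$T$ is nonexpansive and $D=X$]. (v) [$A$ is $\rho$-comonotone and $\rho>-\tfrac12$] $\iff$ $T$ is $\alpha$-averaged. (vi) [$A$ is maximally $\rho$-comonotone and $\rho>-\tfrac12$] $\iff$ [$T$ is $\alpha$-averaged and $D=X$].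
   Context: $J_A=(\mathrm{Id}+A)^{-1}$ with domain $D$. An operator $N$ with domain $D$ is nonexpansive if it is single-valued and $\|Nx-Ny\|\le\|x-y\|$ for all $x,y\in D$. For $\alpha>0$, $T$ is $\alpha$-conically nonexpansive if $T=(1-\alpha)\mathrm{Id}+\alpha N$ for some nonexpansive $N\colon D\to X$; $T$ is $\alpha$-averaged if this holds with $\alpha\in]0,1[$. For $\rho\in\mathbb R$, $A$ is $\rho$-comonotone if $\langle x-y,u-v\rangle\ge\rho\|u-v\|^2$ for all $(x,u),(y,v)\in\operatorname{gra}A$; maximally $\rho$-comonotone if moreover no $\rho$-comonotone operator has a graph properly containing $\operatorname{gra}A$. *)

(* Defs.v *)
From HB Require Import structures.
From mathcomp Require Import all_boot all_order all_algebra.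
From mathcomp Require Import all_classical all_reals all_analysis.
Set Implicit Arguments. Unset Strict Implicit. Unset Printing Implicit Defensive.
Import Order.TTheory GRing.Theory Num.Theory.
Import numFieldNormedType.Exports.
Local Open Scope classical_set_scope.
Local Open Scope ring_scope.

Section Defs.
Variables (R : realType) (X : normedModType R).

(* [inner] is an inner product inducing the norm of X (so a complete X is a
   real Hilbert space). *)
Definition is_inner_product (inner : X -> X -> R) : Prop :=
  [/\ (forall x y, inner x y = inner y x),
      (forall (a : R) x y z, inner (a *: x + y) z = a * inner x z + inner y z)
    & (forall x, inner x x = `|x| ^+ 2)].

Definition dom (A : X -> set X) : set X := [set x | exists u, A x u].
Definition ran (A : X -> set X) : set X := [set u | exists x, A x u].

Definition id_plus (A : X -> set X) : X -> set X :=
  fun x => [set x + u | u in A x].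

Definition inv_op (B : X -> set X) : X -> set X := fun y => [set x | B x y].

Definition resolvent (A : X -> set X) : X -> set X := inv_op (id_plus A).

Definition comonotone (inner : X -> X -> R) (rho : R) (A : X -> set X) : Prop :=
  forall x u y v, A x u -> A y v -> rho * `|u - v| ^+ 2 <= inner (x - y) (u - v).

Definition max_comonotone (inner : X -> X -> R) (rho : R) (A : X -> set X) : Prop :=
  comonotone inner rho A /\
  forall B : X -> set X, comonotone inner rho B ->
    (forall x u, A x u -> B x u) -> (forall x u, B x u -> A x u).

Definition nonexpansive_on (D : set X) (N : X -> X) : Prop :=
  forall x y, D x -> D y -> `|N x - N y| <= `|x - y|.

Definition nonexpansive_op (D : set X) (T : X -> set X) : Prop :=
  exists N : X -> X, nonexpansive_on D N /\
    (forall x, D x -> T x = [set N x]) /\ (forall x, ~ D x -> T x = set0).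

Definition conically_nonexpansive (alpha : R) (D : set X) (T : X -> set X) : Prop :=
  0 < alpha /\
  exists N : X -> X, nonexpansive_on D N /\
    (forall x, D x -> T x = [set (1 - alpha) *: x + alpha *: N x]) /\
    (forall x, ~ D x -> T x = set0).

Definition averaged (alpha : R) (D : set X) (T : X -> set X) : Prop :=
  0 < alpha < 1 /\ conically_nonexpansive alpha D T.

End Defs.

(* Main.v *)
Require Import Defs.
From HB Require Import structures.
From mathcomp Require Import all_boot all_order all_algebra.
From mathcomp Require Import all_classical all_reals all_analysis.
From mathcomp Require Import ring lra.
Import Order.TTheory GRing.Theory Num.Theory.
Import numFieldNormedType.Exports.
Local Open Scope classical_set_scope.
Local Open Scope ring_scope.
Set Implicit Arguments. Unset Strict Implicit.

Section Inner.
Variables (R : realType) (X : completeNormedModType R) (ip : X -> X -> R).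
Hypothesis hip : is_inner_product ip.

Lemma ipC x y : ip x y = ip y x. Proof. by case: hip. Qed.
Lemma ip0l z : ip 0 z = 0.
Proof.
case: hip => _ L _; have := L 1 0 0 z; rewrite scaler0 addr0 mul1r.
move=> h; have : ip 0 z + ip 0 z = ip 0 z + 0 by rewrite addr0 -h.
by move/addrI.
Qed.
Lemma ipDl x y z : ip (x + y) z = ip x z + ip y z.
Proof. by case: hip => _ L _; have := L 1 x y z; rewrite scale1r mul1r. Qed.
Lemma ipZl a x z : ip (a *: x) z = a * ip x z.
Proof. by case: hip => _ L _; have := L a x 0 z; rewrite addr0 ip0l addr0. Qed.
Lemma ipNl x z : ip (- x) z = - ip x z.
Proof. by rewrite -scaleN1r ipZl mulN1r. Qed.
Lemma ipBl x y z : ip (x - y) z = ip x z - ip y z.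
Proof. by rewrite ipDl ipNl. Qed.
Lemma ipDr x y z : ip z (x + y) = ip z x + ip z y.
Proof. by rewrite ipC ipDl !(ipC z). Qed.
Lemma ipZr a x z : ip z (a *: x) = a * ip z x.
Proof. by rewrite ipC ipZl ipC. Qed.
Lemma ipNr x z : ip z (- x) = - ip z x.
Proof. by rewrite ipC ipNl ipC. Qed.
Lemma ipBr x y z : ip z (x - y) = ip z x - ip z y.
Proof. by rewrite ipDr ipNr. Qed.
Lemma ip0r z : ip z 0 = 0.
Proof. by rewrite ipC ip0l. Qed.
Lemma ipxx x : ip x x = `|x| ^+ 2.
Proof. by case: hip. Qed.
Definition ipE := (ipDl, ipDr, ipBl, ipBr, ipNl, ipNr, ipZl, ipZr, ip0l, ip0r).
Lemma nrm2E x : `|x| ^+ 2 = ip x x. Proof. by rewrite ipxx. Qed.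
Lemma polar x y : ip x y = (`|x + y| ^+ 2 - `|x| ^+ 2 - `|y| ^+ 2) / 2.
Proof. rewrite !nrm2E !ipE (ipC y x); by field. Qed.
Lemma sqr_cvg (f : nat -> X) a : f @ \oo --> a -> (fun n => `|f n| ^+ 2) @ \oo --> `|a| ^+ 2.
Proof.
move=> h; have hn := cvg_norm (FF := eventually_filter) h.
rewrite expr2; under eq_fun do rewrite expr2.
exact: (cvgM (FF := eventually_filter) hn hn). Qed.
Lemma ip_cvg (xs ys : nat -> X) x y : xs @ \oo --> x -> ys @ \oo --> y ->
  (fun n => ip (xs n) (ys n)) @ \oo --> ip x y.
Proof.
move=> hx hy; rewrite polar; under eq_fun do rewrite polar.
apply: (cvgMr_tmp (FF := eventually_filter)); apply: (cvgB (FF := eventually_filter)); first apply: (cvgB (FF := eventually_filter)).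
- by apply: sqr_cvg; apply: (cvgD (FF := eventually_filter)).
- exact: sqr_cvg.
- exact: sqr_cvg.
Qed.
Lemma vec_eq (v w : X) : ip (v - w) (v - w) = 0 -> v = w.
Proof. by rewrite ipxx => /eqP; rewrite sqrf_eq0 normr_eq0 subr_eq0 => /eqP. Qed.
Lemma small_t (K Q : R) : (forall t : R, 0 < t -> t <= 1 -> 0 <= K + t * Q) -> 0 <= K.
Proof.
move=> h; rewrite leNgt; apply/negP => hK.
have h1 := h 1 ltr01 (lexx 1); rewrite mul1r in h1.
have hQ : 0 < Q by lra.
have ht0 : 0 < - K / (2 * Q) by apply: divr_gt0; lra.
have ht1 : - K / (2 * Q) <= 1 by rewrite ler_pdivrMr; lra.
have := h _ ht0 ht1.
have -> : - K / (2 * Q) * Q = - K / 2 by field; rewrite gt_eqF.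
lra.
Qed.

Definition epsn (n : nat) : R := n.+1%:R^-1.
Lemma epsn_gt0 n : 0 < epsn n. Proof. by rewrite /epsn invr_gt0 ltr0n. Qed.

Section Minty.
Variable G : X -> X -> Prop.
Hypothesis Gmono : forall a b a' b', G a b -> G a' b' -> 0 <= ip (a - a') (b - b').
Hypothesis Gmax : forall c d, (forall a b, G a b -> 0 <= ip (c - a) (d - b)) -> G c d.
Hypothesis Gne : exists a b, G a b.

Let ell y v x u := ip x v + ip y u - ip y v.
Let q x u := (ip x x + ip u u) / 2.
Let Lev c x u := forall y v, G y v -> ell y v x u + q x u <= c.
Let S := [set c | exists x u, Lev c x u].

Lemma exists_bad x u : exists y v, G y v /\ ip (x - y) (u - v) <= 0.
Proof.
case: (pselect (G x u)) => [Gxu|nG]; first by exists x, u; rewrite subrr ip0l.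
apply: contrapT => hn; apply: nG; apply: Gmax => a b Gab.
case: (leP 0 (ip (x - a) (u - b))) => // /ltW h; exfalso; apply: hn; by exists a, b.
Qed.

Lemma ell_eq y v x u : ell y v x u = ip x u - ip (x - y) (u - v).
Proof. rewrite /ell !ipE; ring. Qed.

Lemma Lev_lb c x u : Lev c x u -> ip x u + q x u <= c.
Proof.
move=> h; have [y [v [Gyv hyv]]] := exists_bad x u; have := h y v Gyv.
rewrite ell_eq; lra.
Qed.

Lemma q_lb x u : 0 <= ip x u + q x u.
Proof.
have : 0 <= ip (x + u) (x + u) by rewrite ipxx sqr_ge0.
rewrite /q !ipE (ipC u x); lra.
Qed.

Lemma Lev_mono c c' x u : Lev c x u -> c <= c' -> Lev c' x u.
Proof. by move=> h hc y v Gyv; apply: le_trans (h y v Gyv) hc. Qed.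

Lemma S_inf : has_inf S.
Proof.
split.
  have [a [b Gab]] := Gne; exists (ip a b + q a b), a, b => y v Gyv.
  rewrite ell_eq; have := Gmono Gab Gyv; lra.
by exists 0 => c [x [u h]]; apply: le_trans (q_lb x u) (Lev_lb h).
Qed.

Let m := inf S.

Lemma m_le c x u : Lev c x u -> m <= c.
Proof. by move=> h; apply: ge_inf; [case: S_inf | exists x, u]. Qed.

Lemma approx (n : nat) : exists p : X * X, Lev (m + epsn n) p.1 p.2.
Proof.
have [c [x [u h]] hc] := inf_adherent (epsn_gt0 n) S_inf.
by exists (x, u); apply: Lev_mono h _; exact: ltW.
Qed.

Lemma mid c1 c2 x1 u1 x2 u2 : Lev c1 x1 u1 -> Lev c2 x2 u2 ->
  Lev ((c1 + c2) / 2 - (ip (x1 - x2) (x1 - x2) + ip (u1 - u2) (u1 - u2)) / 8)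
      (2^-1 *: (x1 + x2)) (2^-1 *: (u1 + u2)).
Proof.
move=> h1 h2 y v Gyv; have := h1 y v Gyv; have := h2 y v Gyv.
rewrite /ell /q !ipE (ipC x2 x1) (ipC u2 u1); lra.
Qed.
Lemma inv_small (e : R) : 0 < e -> exists N : nat, forall n, (N <= n)%N -> epsn n <= e.
Proof.
move=> e0; exists (Num.truncn e^-1) => n hn.
have h := truncnS_gt e^-1.
have h2 : (Num.truncn e^-1).+1%:R <= n.+1%:R :> R by rewrite ler_nat ltnS.
rewrite /epsn -(invrK e) lef_pV2 ?posrE ?ltr0n ?invr_gt0 //; lra.
Qed.

Lemma aux16 (a b c d : R) : a <= 4 * (b + c) -> b <= d / 16 -> c <= d / 16 -> 0 < d / 16 -> a < d.
Proof. lra. Qed.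

Lemma aux8 (mm a b s : R) : mm <= (mm + a + (mm + b)) / 2 - s / 8 -> s <= 4 * (a + b).
Proof. lra. Qed.

Lemma cauchy_seq (xs : nat -> X) :
  (forall n k, `|xs n - xs k| ^+ 2 <= 4 * (epsn n + epsn k)) ->
  cvg (xs @ \oo).
Proof.
move=> hb; apply/cauchy_cvgP; apply/cauchyP => e e0.
have e20 : 0 < e ^+ 2 / 16 by apply: divr_gt0 => //; apply: exprn_gt0.
have [N hN] := inv_small e20.
exists (xs N); exists N => // n /= hn.
rewrite -ball_normE /ball_ /=.
have h1 := hN N (leqnn N); have h2 := hN n hn; have := hb N n.
have := normr_ge0 (xs N - xs n) => hd0 hd.
have hd2 : `|xs N - xs n| ^+ 2 < e ^+ 2 by exact: (aux16 hd h1 h2 e20).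
nra.
Qed.

Lemma minty : exists x, G x (- x).
Proof.
have [z hz] := choice approx.
pose xs := fun n => (z n).1; pose us := fun n => (z n).2.
have hb : forall n k, ip (xs n - xs k) (xs n - xs k) + ip (us n - us k) (us n - us k)
   <= 4 * (epsn n + epsn k).
  move=> n k; have := m_le (mid (hz n) (hz k)); rewrite /xs /us; exact: aux8.
have cx : cvg (xs @ \oo).
  apply: cauchy_seq => n k; have := hb n k; rewrite !ipxx.
  have := sqr_ge0 `|us n - us k|; lra.
have cu : cvg (us @ \oo).
  apply: cauchy_seq => n k; have := hb n k; rewrite !ipxx.
  have := sqr_ge0 `|xs n - xs k|; lra.
set x0 := lim (xs @ \oo) in cx; set u0 := lim (us @ \oo) in cu.
have hL : Lev m x0 u0.
  move=> y v Gyv; apply/ler_addgt0Pr => e e0.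
  have hc : (fun n => ell y v (xs n) (us n) + q (xs n) (us n)) @ \oo --> ell y v x0 u0 + q x0 u0.
    have cc : forall a : X, (fun _ : nat => a) @ \oo --> a by move=> a; exact: cvg_cst.
    apply: (cvgD (FF := eventually_filter)); first apply: (cvgB (FF := eventually_filter)).
    - apply: (cvgD (FF := eventually_filter)); first exact: ip_cvg.
      exact: ip_cvg.
    - exact: ip_cvg.
    - apply: (cvgMr_tmp (FF := eventually_filter)); apply: (cvgD (FF := eventually_filter)).
      + exact: ip_cvg.
      + exact: ip_cvg.
  apply: (cvgr_to_le (FF := eventually_filter) hc).
  have [N hN] := inv_small e0.
  exists N => // n /= hn.
  apply: le_trans (hz n y v Gyv) _; rewrite lerD2l; exact: hN.
have hK : forall y v, G y v ->
    0 <= - m + q x0 u0 + ip y v + (ip x0 y - ip x0 x0) + (ip u0 v - ip u0 u0).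
  move=> y v Gyv; apply: (small_t (Q := q (y - x0) (v - u0))) => t t0 t1.
  pose xt := x0 + t *: (y - x0); pose ut := u0 + t *: (v - u0).
  have hLt : Lev ((1 - t) * (m - q x0 u0) + t * ip y v + q xt ut) xt ut.
    move=> y' v' G'.
    have h1 := hL y' v' G'.
    have h2 : ell y' v' y v <= ip y v by rewrite ell_eq; have := Gmono Gyv G'; lra.
    have E : ell y' v' xt ut = (1 - t) * ell y' v' x0 u0 + t * ell y' v' y v.
      by rewrite /ell /xt /ut !ipE; ring.
    rewrite E.
    have a1 : (1 - t) * ell y' v' x0 u0 <= (1 - t) * (m - q x0 u0).
      by apply: ler_wpM2l; lra.
    have a2 : t * ell y' v' y v <= t * ip y v by apply: ler_wpM2l; lra.
    lra.
  have := m_le hLt.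
  have -> : (1 - t) * (m - q x0 u0) + t * ip y v + q xt ut = m + t * 
      ((- m + q x0 u0 + ip y v + (ip x0 y - ip x0 x0) + (ip u0 v - ip u0 u0)) + t * q (y - x0) (v - u0)).
    rewrite /q /xt /ut !ipE (ipC y x0) (ipC v u0); by field.
  by rewrite lerDl pmulr_rge0.
have lb := Lev_lb hL.
have star : forall y v, G y v -> ip x0 u0 + ip x0 x0 + ip u0 u0 <= ip y v + ip x0 y + ip u0 v.
  by move=> y v Gyv; have := hK y v Gyv; move: lb; rewrite /q; lra.
have Gc : G (- u0) (- x0).
  apply: Gmax => a b Gab; have := star a b Gab.
  have : 0 <= ip (x0 + u0) (x0 + u0) by rewrite ipxx sqr_ge0.
  rewrite !ipE (ipC u0 x0) (ipC a x0); lra.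
have := star _ _ Gc; rewrite !ipE (ipC u0 x0) => h.
have h0 : ip (x0 - - u0) (x0 - - u0) = 0.
  apply/eqP; rewrite eq_le; apply/andP; split.
    by rewrite opprK !ipE (ipC u0 x0); lra.
  by rewrite ipxx sqr_ge0.
have hx := vec_eq h0.
exists (- u0); rewrite opprK; by move: Gc; rewrite hx opprK.
Qed.
End Minty.

Ltac symnorm := repeat match goal with
  |- context [ip ?a ?b] => match goal with
     |- context [ip b a] => assert_fails (constr_eq a b); rewrite (ipC b a) end end.
Ltac ipnorm := rewrite ?nrm2E ?ipE; symnorm.
Ltac veq := apply: vec_eq; rewrite ?ipE; symnorm.

Lemma key (r : R) (a b : X) : -1 < r ->
  (`|a - (2 * r + 1) *: b| <= `|a + b| <-> r * `|b| ^+ 2 <= ip a b).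
Proof.
move=> hr.
have sq : `|a - (2 * r + 1) *: b| ^+ 2 - `|a + b| ^+ 2 = 4 * (r + 1) * (r * `|b| ^+ 2 - ip a b).
  by ipnorm; ring.
have n1 := normr_ge0 (a - (2 * r + 1) *: b); have n2 := normr_ge0 (a + b).
split => h.
  have : `|a - (2 * r + 1) *: b| ^+ 2 <= `|a + b| ^+ 2 by nra.
  nra.
have : `|a - (2 * r + 1) *: b| ^+ 2 <= `|a + b| ^+ 2 by nra.
nra.
Qed.

Lemma uniq_res (r : R) (B : X -> set X) : -1 < r -> comonotone ip r B ->
  forall x u y v, B x u -> B y v -> x + u = y + v -> x = y /\ u = v.
Proof.
move=> hr hB x u y v Bxu Byv e.
have h := hB x u y v Bxu Byv.
have e2 : x - y = - (u - v).
  apply/eqP; rewrite -addr_eq0; apply/eqP.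
  by rewrite addrACA -opprD e subrr.
rewrite e2 ipNl ipxx in h.
have h0 : `|u - v| ^+ 2 = 0.
  apply/eqP; rewrite eq_le sqr_ge0 andbT; nra.
move/eqP: h0; rewrite sqrf_eq0 normr_eq0 subr_eq0 => /eqP euv.
by split => //; move: e; rewrite euv => /addIr.
Qed.

Section Ops.
Variable A : X -> set X.

Lemma inD z : ran (id_plus A) z <-> exists p u, A p u /\ p + u = z.
Proof.
split; first by move=> [p [u Apu e]]; exists p, u.
by move=> [p [u [Apu e]]]; exists p, u.
Qed.

Lemma inT z p : resolvent A z p <-> exists u, A p u /\ p + u = z.
Proof.
split; first by move=> [u Apu e]; exists u.
by move=> [u [Apu e]]; exists u.
Qed.

Lemma conic_iff (r : R) : -1 < r ->
  (comonotone ip r A <->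
   conically_nonexpansive (2 * (r + 1))^-1 (ran (id_plus A)) (resolvent A)).
Proof.
move=> hr; set al := (2 * (r + 1))^-1; set k := 2 * r + 1.
have al0 : 0 < al by rewrite invr_gt0; lra.
have r10 : 2 * (r + 1) != 0 by apply/eqP; lra.
have hr1 : r + 1 != 0 by apply/eqP; lra.
have Nfix : forall p z : X, (1 - al) *: z + al *: (p - k *: (z - p)) = p.
  by move=> p z; veq; rewrite /al /k; field; rewrite ?hr1.
split => [hA|[_ [N [hN [hT hT0]]]]].
  split => //.
  pose P z := xget 0 (resolvent A z).
  have hP : forall z, ran (id_plus A) z -> resolvent A z (P z).
    by move=> z hz; apply: xgetPex; move/inD: hz => [p [u [Apu e]]]; exists p; apply/inT; exists u.
  exists (fun z => P z - k *: (z - P z)); split; last split.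
  - move=> z1 z2 hz1 hz2.
    have /inT [u1 [A1 e1]] := hP _ hz1; have /inT [u2 [A2 e2]] := hP _ hz2.
    move: (P z1) (P z2) A1 A2 e1 e2 => p1 p2 A1 A2 e1 e2.
    have E1 : p1 - k *: (z1 - p1) - (p2 - k *: (z2 - p2)) = (p1 - p2) - k *: (u1 - u2).
      by rewrite -e1 -e2; veq; ring.
    have E2 : z1 - z2 = (p1 - p2) + (u1 - u2) by rewrite -e1 -e2; veq; ring.
    rewrite E1 E2; apply/key => //; exact: hA.
  - move=> z hz; rewrite Nfix.
    apply/seteqP; split => q /=.
      move=> /inT [u [Aqu e]]; have /inT [u' [Apu e']] := hP _ hz.
      have [] := uniq_res hr hA Aqu Apu; first by rewrite e e'.
      by [].
    by move=> ->; exact: hP.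
  - move=> z hz; apply/seteqP; split => q //= hq; apply: hz.
    by move/inT: hq => [u [Aqu e]]; apply/inD; exists q, u.
move=> x u y v Axu Ayv.
have NE : forall x u, A x u -> N (x + u) = x - k *: u.
  move=> x1 u1 A1.
  have hD : ran (id_plus A) (x1 + u1) by apply/inD; exists x1, u1.
  have := hT _ hD; move=> hTe.
  have : resolvent A (x1 + u1) x1 by apply/inT; exists u1.
  rewrite hTe /= => ex.
  have -> : N (x1 + u1) = al^-1 *: (al *: N (x1 + u1)) by rewrite scalerA mulVf ?scale1r // gt_eqF.
  have -> : al *: N (x1 + u1) = x1 - (1 - al) *: (x1 + u1).
    by apply/esym/eqP; rewrite subr_eq (addrC (al *: _)) -ex.
  by veq; rewrite /al /k; field; rewrite ?hr1.
have hD1 : ran (id_plus A) (x + u) by apply/inD; exists x, u.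
have hD2 : ran (id_plus A) (y + v) by apply/inD; exists y, v.
have := hN _ _ hD1 hD2; rewrite !NE //.
have -> : x - k *: u - (y - k *: v) = (x - y) - k *: (u - v) by veq; ring.
have -> : x + u - (y + v) = (x - y) + (u - v) by veq; ring.
by move/key => /(_ hr).
Qed.

Lemma max_iff (r : R) : -1 < r -> dom A !=set0 ->
  (max_comonotone ip r A <-> comonotone ip r A /\ ran (id_plus A) = setT).
Proof.
move=> hr hdom; have hr1 : r + 1 != 0 by apply/eqP; lra.
have hr1' : 1 + r != 0 by apply/eqP; lra.
split => [[hA hmax]|[hA hD]]; last first.
  split => // B hB hAB x u Bxu.
  have : ran (id_plus A) (x + u) by rewrite hD.
  move/inD => [p [u' [Apu e]]].
  have [ex eu] := uniq_res hr hB Bxu (hAB _ _ Apu) (esym e).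
  by rewrite ex eu.
split => //; apply/seteqP; split => z // _.
set c := (1 + r)^-1.
have c0 : 0 < c by rewrite invr_gt0; lra.
pose G a b := A (b + z + r *: (c *: a)) (c *: a).
have G_of : forall x u, A x u -> G ((1 + r) *: u) (x - z - r *: u).
  move=> x u Axu; rewrite /G.
  have -> : c *: ((1 + r) *: u) = u by rewrite scalerA mulVf ?scale1r.
  have -> : x - z - r *: u + z + r *: u = x by veq; ring.
  done.
have Gmono : forall a b a' b', G a b -> G a' b' -> 0 <= ip (a - a') (b - b').
  move=> a b a' b' h1 h2; have := hA _ _ _ _ h1 h2.
  have -> : b + z + r *: (c *: a) - (b' + z + r *: (c *: a')) =
            (b - b') + r *: (c *: (a - a')) by veq; ring.
  have -> : c *: a - c *: a' = c *: (a - a') by rewrite scalerBr.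
  move: (a - a') (b - b') => d e; ipnorm => h.
  have : 0 <= c * ip e d by lra.
  by rewrite pmulr_rge0.
have Gmax : forall c1 c2, (forall a b, G a b -> 0 <= ip (c1 - a) (c2 - b)) -> G c1 c2.
  move=> c1 c2 H; rewrite /G.
  set u := c *: c1; set x := c2 + z + r *: u.
  have hc1 : c1 = (1 + r) *: u by rewrite /u scalerA mulfV ?scale1r.
  have hc2 : c2 = x - z - r *: u by rewrite /x; veq; ring.
  have pt : forall y v, A y v -> r * `|u - v| ^+ 2 <= ip (x - y) (u - v).
    move=> y v Ayv; have := H _ _ (G_of _ _ Ayv).
    rewrite hc1 hc2.
    have -> : (1 + r) *: u - (1 + r) *: v = (1 + r) *: (u - v) by rewrite scalerBr.
    have -> : x - z - r *: u - (y - z - r *: v) = (x - y) - r *: (u - v) by veq; ring.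
    move: (u - v) (x - y) => d e; ipnorm => h.
    have : 0 <= (1 + r) * (ip d e - r * ip d d) by nra.
    rewrite pmulr_rge0; last lra.
    lra.
  pose B y v := A y v \/ (y = x /\ v = u).
  apply: (hmax B) => [||]; last by right.
  - move=> y1 v1 y2 v2 [h1|[-> ->]] [h2|[-> ->]].
    + exact: hA.
    + have := pt _ _ h1.
      have -> : x - y1 = - (y1 - x) by rewrite opprB.
      have -> : u - v1 = - (v1 - u) by rewrite opprB.
      by rewrite ipNl ipNr opprK normrN.
    + exact: pt.
    + by rewrite !subrr normr0 expr0n /= mulr0 ip0l.
  - by move=> y v h; left.
have Gne : exists a b, G a b.
  by have [x [u Axu]] := hdom; exists ((1 + r) *: u), (x - z - r *: u); exact: G_of.
have [a Ga] := minty Gmono Gmax Gne.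
apply/inD; exists (- a + z + r *: (c *: a)), (c *: a); split => //.
by veq; rewrite /c; field; rewrite ?hr1'.
Qed.
End Ops.
End Inner.

Unset Implicit Arguments. Set Strict Implicit.

Theorem proposition3p13 (R : realType) (X : completeNormedModType R)
  (inner : X -> X -> R) (hinner : is_inner_product inner)
  (A : X -> set X) (hdom : dom A !=set0) (rho : R) (hrho : -1 < rho) :
  let D := ran (id_plus A) in
  let T := resolvent A in
  let alpha := (2 * (rho + 1))^-1 in
  (comonotone inner rho A <-> conically_nonexpansive alpha D T) /\
      (max_comonotone inner rho A <-> (conically_nonexpansive alpha D T /\ D = setT)) /\
      (comonotone inner (- 2^-1) A <-> nonexpansive_op D T) /\
      (max_comonotone inner (- 2^-1) A <-> (nonexpansive_op D T /\ D = setT)) /\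
      ((comonotone inner rho A /\ - 2^-1 < rho) <-> averaged alpha D T) /\
      ((max_comonotone inner rho A /\ - 2^-1 < rho) <-> (averaged alpha D T /\ D = setT)).
Proof.
move=> D T alpha.
have hc : comonotone inner rho A <-> conically_nonexpansive alpha D T := conic_iff hinner A hrho.
have hm := max_iff hinner hrho hdom.
have hr2 : -1 < - 2^-1 :> R by lra.
have hc2 := conic_iff hinner A hr2.
have hm2 := max_iff hinner hr2 hdom.
have a1 : (2 * (- 2^-1 + 1))^-1 = 1 :> R.
  have -> : 2 * (- 2^-1 + 1) = 1 :> R by field.
  exact: invr1.
rewrite a1 in hc2.
have conic1 : conically_nonexpansive 1 D T <-> nonexpansive_op D T.
  split => [[_ [N [hN [hT hT0]]]]|[N [hN [hT hT0]]]].
    by exists N; split => //; split => // x hx; rewrite hT // subrr scale0r add0r scale1r.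
  split; first exact: ltr01.
  by exists N; split => //; split => // x hx; rewrite hT // subrr scale0r add0r scale1r.
have al0 : 0 < alpha by rewrite invr_gt0; lra.
have al1 : alpha < 1 <-> - 2^-1 < rho.
  rewrite /alpha invf_lt1; last lra.
  split => h; lra.
split; first exact: hc.
split.
  rewrite hm; split => [[h1 h2]|[h1 h2]]; split => //; by apply/hc.
split; first by rewrite hc2.
split.
  rewrite hm2 -conic1 -hc2; done.
split.
  rewrite /averaged al0 /=; split => [[h1 h2]|[h1 h2]].
    by split; [apply/al1 | apply/hc].
  by split; [apply/hc | apply/al1].
rewrite hm /averaged al0 /=; split => [[[h1 h2] h3]|[[h1 h2] h3]].
  by split => //; split; [apply/al1 | apply/hc].
by split; [split => //; apply/hc | apply/al1].
Qed.
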